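(* Let $|\xi\rangle=\sum_n\lambda_n|n\rangle\neq|0\rangle$ be a normalized single-mode pure state. Let $P_{\rm even}=\sum_{l\ge0}|2l\rangle\langle2l|$ and $P_{\rm odd}=\sum_{l\ge0}|2l+1\rangle\langle2l+1|$. (i) If $\lambda_n=0$ for all odd $n$, then with the measurements $\Pi^A_0=\Pi^B_0=P_{\rm even}$, $\Pi^A_1=\Pi^B_1=P_{\rm odd}$ one has $P(0,0|0,0)=P(0,0|1,1)=P(1,1|0,1)=P(1,1|1,0)=1$, and hence $\mathcal J=1$ (the maximal value); moreover in this case the outcomes satisfy $a=b=x\oplus y$ with probability one. (ii) If $\lambda_n=0$ for all even $n$, the same conclusion $\mathcal J=1$ holds with $\Pi^A_0=P_{\rm odd}$, $\Pi^A_1=P_{\rm even}$, $\Pi^B_0=P_{\rm even}$, $\Pi^B_1=P_{\rm odd}$. In particular $\mathcal J=1$ for the even-coherent state $|\xi\rangle\propto|\alpha\rangle+|-\alpha\rangle$ ($\alpha\neq0$), the odd-coherent state $|\xi\rangle\propto|\alpha\rangle-|-\alpha\rangle$ ($\alpha\ne0$), and the squeezed vacuum $|\xi\rangle=\exp[\tfrac12(\zeta^*a^2-\zeta a^{\dagger2})]|0\rangle$ ($\zeta\neq0$).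
   Context: Modes $A$ and $B$ have annihilation operators $a,b$ and Fock states $|n\rangle$; $|\alpha\rangle$ denotes a coherent state $e^{-|\alpha|^2/2}\sum_n\frac{\alpha^n}{\sqrt{n!}}|n\rangle$. For a normalized single-mode state $|\xi\rangle=\sum_n\lambda_n|n\rangle$ with $|\lambda_0|<1$ and input bits $x,y\in\{0,1\}$, the phase-encoded generalized NOON state is $|\Phi_{xy}\rangle=\mathcal N_{xy}^{-1/2}\big((-1)^x|\xi\rangle_A|0\rangle_B+(-1)^y|0\rangle_A|\xi\rangle_B\big)$ with $\mathcal N_{xy}=2(1+(-1)^{x+y}|\lambda_0|^2)$. The lossless 50:50 beam splitter is the unitary $U$ with $U|0,0\rangle=|0,0\rangle$, $Ua^\dagger U^\dagger=(a^\dagger+b^\dagger)/\sqrt2$, $Ub^\dagger U^\dagger=(a^\dagger-b^\dagger)/\sqrt2$; set $|\Phi''_{xy}\rangle=U|\Phi_{xy}\rangle$. For two-outcome projective measurements $\{\Pi^A_0,\Pi^A_1\}$, $\{\Pi^B_0,\Pi^B_1\}$, $P(a,b|x,y)=\langle\Phi''_{xy}|\Pi^A_a\otimes\Pi^B_b|\Phi''_{xy}\rangle$ and $\mathcal J=\frac14\big[P(0,0|0,0)+P(0,0|1,1)+P(1,1|0,1)+P(1,1|1,0)\big]$. $\oplus$ is addition mod 2. *)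

(* Defs.v *)
From Stdlib Require Import Reals Lra Lia Arith Bool.
Open Scope R_scope.

Record Cpx := mkC { Cre : R ; Cim : R }.
Definition C0 : Cpx := mkC 0 0.
Definition C1 : Cpx := mkC 1 0.
Definition Cadd (z w : Cpx) : Cpx := mkC (Cre z + Cre w) (Cim z + Cim w).
Definition Copp (z : Cpx) : Cpx := mkC (- Cre z) (- Cim z).
Definition Cmul (z w : Cpx) : Cpx :=
  mkC (Cre z * Cre w - Cim z * Cim w) (Cre z * Cim w + Cim z * Cre w).
Definition RC (r : R) : Cpx := mkC r 0.
Definition Cscale (r : R) (z : Cpx) : Cpx := mkC (r * Cre z) (r * Cim z).
Fixpoint Cpow (z : Cpx) (n : nat) : Cpx :=
  match n with O => C1 | S n' => Cmul z (Cpow z n') end.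
Definition Cnorm2 (z : Cpx) : R := Cre z * Cre z + Cim z * Cim z.
Definition Cabs (z : Cpx) : R := sqrt (Cnorm2 z).

(** * Single-mode states in the Fock basis: lam n = <n|xi> *)
Definition normalized (lam : nat -> Cpx) : Prop :=
  infinite_sum (fun n => Cnorm2 (lam n)) 1.

Definition sgn (b : bool) : R := if b then -1 else 1.

Definition Nxy (lam : nat -> Cpx) (x y : bool) : R :=
  2 * (1 + sgn (xorb x y) * Cnorm2 (lam 0%nat)).

(** Two-mode state |Phi_xy> in the Fock basis: Phi p q = <p,q|Phi_xy> *)
Definition Phi (lam : nat -> Cpx) (x y : bool) (p q : nat) : Cpx :=
  Cscale (/ sqrt (Nxy lam x y))
    (Cadd (Cscale (sgn x) (if Nat.eqb q 0 then lam p else C0))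
          (Cscale (sgn y) (if Nat.eqb p 0 then lam q else C0))).

(** Matrix elements <r,s|U|p,q> of the 50:50 beam splitter determined by
    U|0,0> = |0,0>, U a^+ U^+ = (a^+ + b^+)/sqrt2, U b^+ U^+ = (a^+ - b^+)/sqrt2:
    U|p,q> = (p! q!)^{-1/2} ((a^+ + b^+)/sqrt2)^p ((a^+ - b^+)/sqrt2)^q |0,0>
           = 2^{-(p+q)/2} (p!q!)^{-1/2}
             sum_{i<=p, j<=q} C(p,i) C(q,j) (-1)^(q-j) sqrt((i+j)! (p+q-i-j)!) |i+j, p+q-i-j>. *)
Definition bs (r s p q : nat) : R :=
  if Nat.eqb (r + s) (p + q) then
    (/ sqrt 2) ^ (p + q)
    * sqrt (INR (fact r * fact s) / INR (fact p * fact q))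
    * sum_f_R0 (fun i => if (Nat.leb i p && Nat.leb (r - i) q)%bool
                         then Binomial.C p i * Binomial.C q (r - i)
                              * (-1) ^ (q - (r - i))
                         else 0) r
  else 0.

(** |Phi''_xy> = U |Phi_xy>; U conserves total photon number, so the
    matrix product is the finite sum over p + q = r + s. *)
Definition Phi2 (lam : nat -> Cpx) (x y : bool) (r s : nat) : Cpx :=
  let n := (r + s)%nat in
  let fix go (k : nat) : Cpx :=
    match k with
    | O => Cscale (bs r s 0 n) (Phi lam x y 0 n)
    | S k' => Cadd (go k') (Cscale (bs r s k (n - k)) (Phi lam x y k (n - k)))
    end in
  go n.

(** A two-outcome projective measurement diagonal in the Fock basis:
    meas a n = true iff |n><n| is a summand of Pi_a. *)
Definition fock_meas := bool -> nat -> bool.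

Definition P_even : nat -> bool := fun n => Nat.even n.
Definition P_odd  : nat -> bool := fun n => Nat.odd n.

Definition meas_even_odd : fock_meas := fun a => if a then P_odd else P_even.
Definition meas_odd_even : fock_meas := fun a => if a then P_even else P_odd.

(** prob lam MA MB a b x y p  :<->  P(a,b|x,y) = p, where
    P(a,b|x,y) = <Phi''_xy| Pi^A_a (x) Pi^B_b |Phi''_xy>
               = sum_{k,m} [k in Pi^A_a][m in Pi^B_b] |<k,m|Phi''_xy>|^2,
    the (nonnegative) double series being summed along diagonals k + m = n. *)
Definition prob (lam : nat -> Cpx) (MA MB : fock_meas) (a b x y : bool) (p : R) : Prop :=
  infinite_sum
    (fun n => sum_f_R0 (fun k => if (MA a k && MB b (n - k)%nat)%bool
                                 then Cnorm2 (Phi2 lam x y k (n - k)%nat) else 0) n)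
    p.

Definition J_value (lam : nat -> Cpx) (MA MB : fock_meas) (j : R) : Prop :=
  exists p1 p2 p3 p4 : R,
    prob lam MA MB false false false false p1 /\
    prob lam MA MB false false true true p2 /\
    prob lam MA MB true true false true p3 /\
    prob lam MA MB true true true false p4 /\
    j = (p1 + p2 + p3 + p4) / 4.

Definition coh (alpha : Cpx) (n : nat) : Cpx :=
  Cscale (exp (- Cnorm2 alpha / 2) / sqrt (INR (fact n))) (Cpow alpha n).

(** squeezed vacuum exp[(zeta^* a^2 - zeta a^{+2})/2]|0>, zeta = r e^{i theta}, in its
    Fock expansion: <2l|xi> = (cosh r)^{-1/2} (-e^{i theta} tanh r)^l sqrt((2l)!)/(2^l l!),
    <2l+1|xi> = 0. *)
Definition sqz (zeta : Cpx) (n : nat) : Cpx :=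
  let r := Cabs zeta in
  let w := Cscale (- tanh r / r) zeta in
  if Nat.even n then
    Cscale (/ sqrt (cosh r) * sqrt (INR (fact n))
            / (2 ^ Nat.div2 n * INR (fact (Nat.div2 n))))
           (Cpow w (Nat.div2 n))
  else C0.

(* Main.v *)
Require Import Defs.
From Stdlib Require Import Reals Bool Lra Lia Arith.
Open Scope R_scope.
From Coquelicot Require Import Hierarchy Series.

Lemma Ceq (z w : Cpx) : Cre z = Cre w -> Cim z = Cim w -> z = w.
Proof. destruct z, w; simpl; intros; subst; reflexivity. Qed.

Definition go (lam : nat -> Cpx) (x y : bool) (r s n : nat) : nat -> Cpx :=
  fix go (k : nat) : Cpx :=
  match k with
  | O => Cscale (bs r s 0 n) (Phi lam x y 0 n)
  | S k' => Cadd (go k') (Cscale (bs r s k (n - k)) (Phi lam x y k (n - k)))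
  end.

Lemma Phi2_go lam x y r s : Phi2 lam x y r s = go lam x y r s (r + s) (r + s).
Proof. reflexivity. Qed.

Definition dlt (j m : nat) : R := if Nat.eqb j m then 1 else 0.

Lemma Phi_eq lam x y n k : (k <= n)%nat ->
  Phi lam x y k (n - k) =
  Cscale (/ sqrt (Nxy lam x y) * (sgn x * dlt k n + sgn y * dlt k 0)) (lam n).
Proof.
  intros Hk. unfold Phi, dlt.
  destruct (Nat.eqb_spec (n - k) 0) as [H1|H1];
  destruct (Nat.eqb_spec k 0) as [H2|H2];
  destruct (Nat.eqb_spec k n) as [H3|H3]; try lia.
  all: try subst k; rewrite ?Nat.sub_0_r in *; try (subst n); apply Ceq; simpl; ring.
Qed.

Lemma go_eq lam x y r s n k : (k <= n)%nat ->
  go lam x y r s n k =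
  Cscale (sum_f_R0 (fun j => bs r s j (n - j) *
     (/ sqrt (Nxy lam x y) * (sgn x * dlt j n + sgn y * dlt j 0))) k) (lam n).
Proof.
  induction k as [|k IH]; intros Hk.
  - simpl. pose proof (Phi_eq lam x y n 0 Hk) as E. rewrite Nat.sub_0_r in E.
    rewrite E, Nat.sub_0_r. apply Ceq; simpl; ring.
  - change (go lam x y r s n (S k)) with
      (Cadd (go lam x y r s n k) (Cscale (bs r s (S k) (n - S k)) (Phi lam x y (S k) (n - S k)))).
    rewrite IH by lia. rewrite Phi_eq by lia. rewrite tech5.
    apply Ceq; simpl; ring.
Qed.

Lemma sum_delta_gt f m n : (n < m)%nat ->
  sum_f_R0 (fun j => f j * dlt j m) n = 0.
Proof.
  induction n; intros H.
  - simpl; unfold dlt. destruct (Nat.eqb_spec 0 m); [lia|ring].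
  - rewrite tech5, IHn by lia. unfold dlt. destruct (Nat.eqb_spec (S n) m); [lia|ring].
Qed.

Lemma sum_delta f m n : (m <= n)%nat ->
  sum_f_R0 (fun j => f j * dlt j m) n = f m.
Proof.
  induction n; intros H.
  - replace m with 0%nat by lia. simpl. unfold dlt. simpl. ring.
  - destruct (Nat.eq_dec m (S n)) as [->|Hne].
    + rewrite tech5, sum_delta_gt by lia. unfold dlt. rewrite Nat.eqb_refl. ring.
    + rewrite tech5, IHn by lia. unfold dlt. destruct (Nat.eqb_spec (S n) m); [lia|ring].
Qed.

Lemma Phi2_eq lam x y r s :
  Phi2 lam x y r s = Cscale (/ sqrt (Nxy lam x y) *
     (sgn x * bs r s (r + s) 0 + sgn y * bs r s 0 (r + s))) (lam (r + s)%nat).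
Proof.
  rewrite Phi2_go, go_eq by lia.
  f_equal.
  set (n := (r + s)%nat).
  set (c := / sqrt (Nxy lam x y)).
  transitivity (sum_f_R0 (fun j => (c * sgn x * bs r s j (n - j)) * dlt j n) n
              + sum_f_R0 (fun j => (c * sgn y * bs r s j (n - j)) * dlt j 0) n).
  - rewrite <- sum_plus. apply sum_eq. intros. ring.
  - rewrite !sum_delta by lia. rewrite Nat.sub_diag, Nat.sub_0_r. ring.
Qed.
Lemma sum_last f r : (forall i, (i < r)%nat -> f i = 0) -> sum_f_R0 f r = f r.
Proof.
  intros H. destruct r as [|r]; [reflexivity|].
  rewrite tech5. assert (sum_f_R0 f r = 0) as ->; [|ring].
  assert (forall m, (m <= r)%nat -> sum_f_R0 f m = 0) as G; [|apply G; lia].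
  induction m; intros Hm; [simpl; apply H; lia|]. rewrite tech5, IHm, H by lia. ring.
Qed.

Lemma sum_first f r : (forall i, (0 < i)%nat -> f i = 0) -> sum_f_R0 f r = f 0%nat.
Proof.
  intros H. induction r; [reflexivity|]. rewrite tech5, IHr, (H (S r)) by lia. ring.
Qed.

Definition Kc (r s : nat) : R :=
  (/ sqrt 2) ^ (r + s) * sqrt (INR (fact r * fact s) / INR (fact (r + s))).

Lemma bs_n0 r s : bs r s (r + s) 0 = Kc r s * Binomial.C (r + s) r.
Proof.
  unfold bs, Kc. rewrite Nat.add_0_r, Nat.eqb_refl. simpl (fact 0). rewrite Nat.mul_1_r.
  rewrite sum_last.
  - rewrite Nat.sub_diag. replace (Nat.leb r (r + s)) with true by (symmetry; apply Nat.leb_le; lia).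
    simpl. unfold Binomial.C at 2. simpl. field.
  - intros i Hi. replace (Nat.leb (r - i) 0) with false by (symmetry; apply Nat.leb_gt; lia).
    rewrite andb_false_r. reflexivity.
Qed.

Lemma bs_0n r s : bs r s 0 (r + s) = Kc r s * Binomial.C (r + s) r * (-1) ^ s.
Proof.
  unfold bs, Kc. rewrite Nat.add_0_l, Nat.eqb_refl. simpl (fact 0). rewrite Nat.mul_1_l.
  rewrite sum_first.
  - rewrite Nat.sub_0_r. replace (Nat.leb r (r + s)) with true by (symmetry; apply Nat.leb_le; lia).
    simpl. replace (r + s - r)%nat with s by lia. unfold Binomial.C at 1. simpl. field.
  - intros i Hi. destruct i; [lia|]. reflexivity.
Qed.

Lemma Cnorm2_scale a z : Cnorm2 (Cscale a z) = a * a * Cnorm2 z.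
Proof. unfold Cnorm2; simpl; ring. Qed.

Lemma Cnorm2_ge0 z : 0 <= Cnorm2 z.
Proof. unfold Cnorm2. nra. Qed.

Lemma sgn_sq b : sgn b * sgn b = 1.
Proof. destruct b; simpl; ring. Qed.

Lemma m1_sq m : (-1) ^ m * (-1) ^ m = 1.
Proof. induction m; simpl; [ring|]. replace (-1 * (-1) ^ m * (-1 * (-1) ^ m)) with ((-1) ^ m * (-1) ^ m) by ring. exact IHm. Qed.

Lemma Kc_sq r s : Kc r s * Kc r s * (Binomial.C (r + s) r * Binomial.C (r + s) r)
  = (/ 2) ^ (r + s) * Binomial.C (r + s) r.
Proof.
  unfold Kc.
  assert (Hq : 0 <= INR (fact r * fact s) / INR (fact (r + s))).
  { apply Rmult_le_pos; [apply pos_INR|]. left. apply Rinv_0_lt_compat, lt_0_INR, lt_O_fact. }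
  replace ((/ sqrt 2) ^ (r + s) * sqrt (INR (fact r * fact s) / INR (fact (r + s))) *
    ((/ sqrt 2) ^ (r + s) * sqrt (INR (fact r * fact s) / INR (fact (r + s)))))
   with ((/ sqrt 2 * / sqrt 2) ^ (r + s) * (sqrt (INR (fact r * fact s) / INR (fact (r + s))) *
       sqrt (INR (fact r * fact s) / INR (fact (r + s))))) by (rewrite Rpow_mult_distr; ring).
  rewrite sqrt_sqrt by exact Hq.
  rewrite <- Rinv_mult, sqrt_sqrt by lra.
  unfold Binomial.C. replace (r + s - r)%nat with s by lia. rewrite mult_INR.
  pose proof (INR_fact_neq_0 r). pose proof (INR_fact_neq_0 s). pose proof (INR_fact_neq_0 (r+s)).
  field. auto.
Qed.

Lemma norm_Phi2 lam x y r s : 0 < Nxy lam x y ->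
  Cnorm2 (Phi2 lam x y r s) =
  / Nxy lam x y * ((/ 2) ^ (r + s) * Binomial.C (r + s) r) *
  ((sgn x + sgn y * (-1) ^ s) * (sgn x + sgn y * (-1) ^ s)) * Cnorm2 (lam (r + s)%nat).
Proof.
  intros HN. rewrite Phi2_eq, Cnorm2_scale, bs_n0, bs_0n, <- Kc_sq.
  replace (/ Nxy lam x y) with (/ sqrt (Nxy lam x y) * / sqrt (Nxy lam x y)).
  - ring.
  - rewrite <- Rinv_mult, sqrt_sqrt by lra. reflexivity.
Qed.
Lemma sq_sgn x y z : z * z = 1 ->
  (sgn x + sgn y * z) * (sgn x + sgn y * z) = 2 + 2 * (sgn x * sgn y) * z.
Proof.
  intros Hz. transitivity (sgn x * sgn x + sgn y * sgn y * (z * z) + 2 * (sgn x * sgn y) * z); [ring|].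
  rewrite !sgn_sq, Hz. ring.
Qed.

Lemma inner_sum lam (MA MB : fock_meas) (a b x y : bool) (n : nat) : 0 < Nxy lam x y ->
  (forall k, (k <= n)%nat -> (MA a k && MB b (n - k)%nat)%bool = false ->
     Cnorm2 (lam n) * ((sgn x + sgn y * (-1) ^ (n - k)) * (sgn x + sgn y * (-1) ^ (n - k))) = 0) ->
  sum_f_R0 (fun k => if (MA a k && MB b (n - k)%nat)%bool
                     then Cnorm2 (Phi2 lam x y k (n - k)%nat) else 0) n
  = Cnorm2 (lam n) / Nxy lam x y * (2 + 2 * (sgn x * sgn y) * 0 ^ n).
Proof.
  intros HN Hv.
  set (D := / Nxy lam x y * (/ 2) ^ n * Cnorm2 (lam n)).
  transitivity (sum_f_R0 (fun k => (Binomial.C n k * 1 ^ k * 1 ^ (n - k)) * (D * 2)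
      + (Binomial.C n k * 1 ^ k * (-1) ^ (n - k)) * (D * 2 * (sgn x * sgn y))) n).
  - apply sum_eq. intros k Hk.
    assert (E : forall z, z = (sgn x + sgn y * (-1) ^ (n - k)) * (sgn x + sgn y * (-1) ^ (n - k)) ->
        / Nxy lam x y * ((/ 2) ^ n * Binomial.C n k) * z * Cnorm2 (lam n) =
        (Binomial.C n k * 1 ^ k * 1 ^ (n - k)) * (D * 2) +
        (Binomial.C n k * 1 ^ k * (-1) ^ (n - k)) * (D * 2 * (sgn x * sgn y))).
    { intros z ->. rewrite sq_sgn by apply m1_sq. rewrite !pow1. unfold D. ring. }
    destruct (MA a k && MB b (n - k)%nat)%bool eqn:Hc.
    + rewrite norm_Phi2 by exact HN. replace (k + (n - k))%nat with n by lia.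
      apply E. reflexivity.
    + pose proof (Hv k Hk Hc) as H0. rewrite <- (E _ eq_refl).
      transitivity (/ Nxy lam x y * ((/ 2) ^ n * Binomial.C n k) *
        (Cnorm2 (lam n) * ((sgn x + sgn y * (-1) ^ (n - k)) * (sgn x + sgn y * (-1) ^ (n - k))))).
      * rewrite H0. ring.
      * ring.
  - rewrite sum_plus, <- !scal_sum, <- !binomial.
    replace (1 + 1) with 2 by ring. replace (1 + -1) with 0 by ring.
    unfold D. replace ((/ 2) ^ n) with (/ 2 ^ n) by (rewrite pow_inv; reflexivity).
    assert (0 < 2 ^ n) by (apply pow_lt; lra).
    set (t := 2 ^ n) in *. set (z := 0 ^ n). set (N := Nxy lam x y) in *. set (c := Cnorm2 (lam n)). set (q := sgn x * sgn y).
    assert (Hz : / t * z = z).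
    { unfold t, z. destruct n; [simpl; field|]. rewrite pow_i by lia. ring. }
    clearbody t z N c q. clear -H HN Hz.
    replace (/ N * / t * c * 2 * q * z) with (/ N * c * 2 * q * (/ t * z)) by ring.
    rewrite Hz. field. split; lra.
Qed.

Lemma sum_zero_pow f m : sum_f_R0 (fun n => f n * 0 ^ n) m = f 0%nat.
Proof. rewrite sum_first; [simpl; ring|]. intros i Hi. rewrite pow_i by exact Hi. ring. Qed.

Lemma sgn_xor x y : sgn (xorb x y) = sgn x * sgn y.
Proof. destruct x, y; simpl; ring. Qed.

Lemma prob_one lam (MA MB : fock_meas) (a b x y : bool) : normalized lam -> 0 < Nxy lam x y ->
  (forall n k, (k <= n)%nat -> (MA a k && MB b (n - k)%nat)%bool = false ->
     Cnorm2 (lam n) * ((sgn x + sgn y * (-1) ^ (n - k)) * (sgn x + sgn y * (-1) ^ (n - k))) = 0) ->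
  prob lam MA MB a b x y 1.
Proof.
  intros Hn HN Hv. unfold prob.
  intros eps Heps.
  destruct (Hn (eps * Nxy lam x y / 2)) as [M HM].
  { apply Rmult_lt_0_compat; [apply Rmult_lt_0_compat|]; lra. }
  exists M. intros m Hm.
  rewrite (sum_eq _ (fun n => Cnorm2 (lam n) / Nxy lam x y * 2 +
      (Cnorm2 (lam n) / Nxy lam x y * 2 * (sgn x * sgn y)) * 0 ^ n)).
  2:{ intros i _. rewrite inner_sum by auto. ring. }
  rewrite sum_plus, sum_zero_pow.
  rewrite (sum_eq _ (fun n => Cnorm2 (lam n) * (2 / Nxy lam x y))) by (intros; unfold Rdiv; ring).
  rewrite <- scal_sum.
  specialize (HM m Hm). unfold R_dist in *.
  replace (2 / Nxy lam x y * sum_f_R0 (fun i : nat => Cnorm2 (lam i)) m +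
     Cnorm2 (lam 0%nat) / Nxy lam x y * 2 * (sgn x * sgn y) - 1)
   with ((sum_f_R0 (fun n : nat => Cnorm2 (lam n)) m - 1) * (2 / Nxy lam x y)).
  2:{ unfold Nxy in *. rewrite sgn_xor in *. field. lra. }
  rewrite Rabs_mult, (Rabs_right (2 / Nxy lam x y)).
  2:{ left. apply Rdiv_lt_0_compat; lra. }
  apply (Rmult_lt_compat_r (2 / Nxy lam x y)) in HM; [|apply Rdiv_lt_0_compat; lra].
  replace (eps * Nxy lam x y / 2 * (2 / Nxy lam x y)) with eps in HM by (field; lra).
  exact HM.
Qed.
Lemma m1_pow m : (-1) ^ m = if Nat.even m then 1 else -1.
Proof.
  induction m; [reflexivity|]. simpl pow. rewrite Nat.even_succ, <- Nat.negb_even, IHm.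
  destruct (Nat.even m); simpl; ring.
Qed.

Lemma Cnorm2_C0 : Cnorm2 C0 = 0.
Proof. unfold Cnorm2, C0; simpl; ring. Qed.

Lemma vanish_i lam x y n k : (forall n, Nat.odd n = true -> lam n = C0) -> (k <= n)%nat ->
  (meas_even_odd (xorb x y) k && meas_even_odd (xorb x y) (n - k)%nat)%bool = false ->
  Cnorm2 (lam n) * ((sgn x + sgn y * (-1) ^ (n - k)) * (sgn x + sgn y * (-1) ^ (n - k))) = 0.
Proof.
  intros Hodd Hk Hc. destruct (Nat.even n) eqn:En.
  - rewrite m1_pow, Nat.even_sub, En by exact Hk.
    destruct x, y; simpl in Hc; unfold meas_even_odd, P_even, P_odd, Nat.odd in Hc;
    rewrite Nat.even_sub, En in Hc by exact Hk;
    destruct (Nat.even k); simpl in *; try discriminate; ring.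
  - rewrite Hodd by (unfold Nat.odd; rewrite En; reflexivity). rewrite Cnorm2_C0. ring.
Qed.

Lemma vanish_ii lam x y n k : (forall n, Nat.even n = true -> lam n = C0) -> (k <= n)%nat ->
  (meas_odd_even (xorb x y) k && meas_even_odd (xorb x y) (n - k)%nat)%bool = false ->
  Cnorm2 (lam n) * ((sgn x + sgn y * (-1) ^ (n - k)) * (sgn x + sgn y * (-1) ^ (n - k))) = 0.
Proof.
  intros Hev Hk Hc. destruct (Nat.even n) eqn:En.
  - rewrite Hev by exact En. rewrite Cnorm2_C0. ring.
  - rewrite m1_pow, Nat.even_sub, En by exact Hk.
    destruct x, y; simpl in Hc; unfold meas_even_odd, meas_odd_even, P_even, P_odd, Nat.odd in Hc;
    rewrite Nat.even_sub, En in Hc by exact Hk;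
    destruct (Nat.even k); simpl in *; try discriminate; ring.
Qed.

Lemma Nxy_pos lam x y : Cnorm2 (lam 0%nat) < 1 -> 0 < Nxy lam x y.
Proof.
  intros H. pose proof (Cnorm2_ge0 (lam 0%nat)). unfold Nxy.
  destruct (xorb x y); simpl; lra.
Qed.

Lemma part_i lam : normalized lam -> Cnorm2 (lam 0%nat) < 1 ->
  (forall n, Nat.odd n = true -> lam n = C0) ->
  forall x y : bool, prob lam meas_even_odd meas_even_odd (xorb x y) (xorb x y) x y 1.
Proof.
  intros Hn H0 Hodd x y. apply prob_one; auto using Nxy_pos.
  intros n k Hk Hc. apply vanish_i; auto.
Qed.

Lemma part_ii lam : normalized lam -> Cnorm2 (lam 0%nat) < 1 ->
  (forall n, Nat.even n = true -> lam n = C0) ->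
  forall x y : bool, prob lam meas_odd_even meas_even_odd (xorb x y) (xorb x y) x y 1.
Proof.
  intros Hn H0 Hev x y. apply prob_one; auto using Nxy_pos.
  intros n k Hk Hc. apply vanish_ii; auto.
Qed.

Lemma J_i lam : normalized lam -> Cnorm2 (lam 0%nat) < 1 ->
  (forall n, Nat.odd n = true -> lam n = C0) ->
  J_value lam meas_even_odd meas_even_odd 1.
Proof.
  intros Hn H0 Hodd. pose proof (part_i lam Hn H0 Hodd) as P.
  exists 1, 1, 1, 1. split; [exact (P false false)|].
  split; [exact (P true true)|]. split; [exact (P false true)|].
  split; [exact (P true false)|]. field.
Qed.

Lemma J_ii lam : normalized lam -> Cnorm2 (lam 0%nat) < 1 ->
  (forall n, Nat.even n = true -> lam n = C0) ->
  J_value lam meas_odd_even meas_even_odd 1.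
Proof.
  intros Hn H0 Hev. pose proof (part_ii lam Hn H0 Hev) as P.
  exists 1, 1, 1, 1. split; [exact (P false false)|].
  split; [exact (P true true)|]. split; [exact (P false true)|].
  split; [exact (P true false)|]. field.
Qed.
Lemma Cpow_opp a n : Cpow (Copp a) n = Cscale ((-1) ^ n) (Cpow a n).
Proof.
  induction n; simpl.
  - apply Ceq; simpl; ring.
  - rewrite IHn. apply Ceq; simpl; ring.
Qed.

Lemma Cnorm2_opp a : Cnorm2 (Copp a) = Cnorm2 a.
Proof. unfold Cnorm2; simpl; ring. Qed.

Lemma Cnorm2_mul a b : Cnorm2 (Cmul a b) = Cnorm2 a * Cnorm2 b.
Proof. unfold Cnorm2; simpl; ring. Qed.

Lemma Cnorm2_pow a n : Cnorm2 (Cpow a n) = Cnorm2 a ^ n.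
Proof.
  induction n; simpl.
  - unfold Cnorm2; simpl; ring.
  - rewrite Cnorm2_mul, IHn. reflexivity.
Qed.

Lemma coh_even_sum a n : Cadd (coh a n) (coh (Copp a) n) =
  Cscale (exp (- Cnorm2 a / 2) / sqrt (INR (fact n)) * (1 + (-1) ^ n)) (Cpow a n).
Proof. unfold coh. rewrite Cpow_opp, Cnorm2_opp. apply Ceq; simpl; ring. Qed.

Lemma coh_odd_sum a n : Cadd (coh a n) (Copp (coh (Copp a) n)) =
  Cscale (exp (- Cnorm2 a / 2) / sqrt (INR (fact n)) * (1 - (-1) ^ n)) (Cpow a n).
Proof. unfold coh. rewrite Cpow_opp, Cnorm2_opp. apply Ceq; simpl; ring. Qed.

Lemma psum_mono f N k : (forall n, 0 <= f n) -> sum_f_R0 f N <= sum_f_R0 f (N + k).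
Proof.
  intros Hf. induction k. - rewrite Nat.add_0_r. lra.
  - rewrite Nat.add_succ_r, tech5. specialize (Hf (S (N + k))). lra.
Qed.

Lemma psum_le f l N : (forall n, 0 <= f n) -> infinite_sum f l -> sum_f_R0 f N <= l.
Proof.
  intros Hf Hs. destruct (Rle_or_lt (sum_f_R0 f N) l) as [H|H]; [exact H|].
  exfalso. destruct (Hs (sum_f_R0 f N - l)) as [M HM]; [lra|].
  specialize (HM (N + M)%nat ltac:(lia)). unfold R_dist in HM.
  pose proof (psum_mono f N M Hf).
  rewrite Rabs_right in HM by lra. lra.
Qed.

Lemma Cnorm2_pos a : a <> C0 -> 0 < Cnorm2 a.
Proof.
  intros H. destruct a as [u v]. unfold Cnorm2; simpl.
  destruct (Req_dec u 0), (Req_dec v 0); subst; try nra.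
  exfalso. apply H. reflexivity.
Qed.

Lemma even_coh (alpha c : Cpx) (lam : nat -> Cpx) :
  alpha <> C0 ->
  (forall n, lam n = Cmul c (Cadd (coh alpha n) (coh (Copp alpha) n))) ->
  normalized lam ->
  J_value lam meas_even_odd meas_even_odd 1.
Proof.
  intros Ha Hl Hn. apply J_i; auto.
  - assert (Hc : forall n, Cnorm2 (lam n) = Cnorm2 c *
       ((exp (- Cnorm2 alpha / 2) / sqrt (INR (fact n)) * (1 + (-1) ^ n)) *
        (exp (- Cnorm2 alpha / 2) / sqrt (INR (fact n)) * (1 + (-1) ^ n))) * Cnorm2 alpha ^ n).
    { intros n. rewrite Hl, coh_even_sum, Cnorm2_mul, Cnorm2_scale, Cnorm2_pow. ring. }
    pose proof (psum_le _ _ 2 (fun n => Cnorm2_ge0 (lam n)) Hn) as Hs.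
    simpl in Hs.
    pose proof (Cnorm2_pos _ Ha) as HA.
    pose proof (Cnorm2_ge0 (lam 0%nat)). pose proof (Cnorm2_ge0 (lam 1%nat)).
    assert (H02 : Cnorm2 (lam 2%nat) * 2 = Cnorm2 (lam 0%nat) * (Cnorm2 alpha * Cnorm2 alpha)).
    { rewrite !Hc.
      replace (sqrt (INR (fact 2))) with (sqrt 2) by (f_equal; simpl; ring).
      replace (sqrt (INR (fact 0))) with 1 by (simpl; rewrite sqrt_1; reflexivity).
      assert (S2 : sqrt 2 * sqrt 2 = 2) by (apply sqrt_sqrt; lra).
      assert (Hsq : sqrt 2 <> 0) by (intro Hq0; rewrite Hq0 in S2; lra).
      set (e := exp (- Cnorm2 alpha / 2)). set (s := sqrt 2) in *.
      replace (e / s * (1 + (-1) ^ 2) * (e / s * (1 + (-1) ^ 2))) with (4 * e * e * / (s * s))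
        by (simpl; field; exact Hsq).
      rewrite S2. simpl. field. }
    set (A := Cnorm2 alpha) in *.
    assert (0 < A * A) by nra.
    nra.
  - intros n Hodd. rewrite Hl, coh_even_sum, m1_pow.
    replace (Nat.even n) with false by (unfold Nat.odd in Hodd; destruct (Nat.even n); simpl in *; congruence).
    apply Ceq; simpl; ring.
Qed.

Lemma odd_coh (alpha c : Cpx) (lam : nat -> Cpx) :
  alpha <> C0 ->
  (forall n, lam n = Cmul c (Cadd (coh alpha n) (Copp (coh (Copp alpha) n)))) ->
  normalized lam ->
  J_value lam meas_odd_even meas_even_odd 1.
Proof.
  intros Ha Hl Hn.
  assert (Hz : forall n, Nat.even n = true -> lam n = C0).
  { intros n He. rewrite Hl, coh_odd_sum, m1_pow, He. apply Ceq; simpl; ring. }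
  apply J_ii; auto. rewrite (Hz 0%nat eq_refl), Cnorm2_C0. lra.
Qed.
Definition aa (l : nat) : R :=
  INR (fact (2 * l)) / ((2 ^ l * INR (fact l)) * (2 ^ l * INR (fact l))).

Lemma aa_0 : aa 0 = 1.
Proof. unfold aa. simpl. field. Qed.

Lemma aa_rec l : aa (S l) * (2 * INR l + 2) = aa l * (2 * INR l + 1).
Proof.
  unfold aa. replace (2 * S l)%nat with (S (S (2 * l))) by lia.
  rewrite !fact_simpl, !mult_INR, !S_INR. rewrite mult_INR. simpl pow.
  pose proof (INR_fact_neq_0 l). pose proof (INR_fact_neq_0 (2 * l)).
  assert (0 < 2 ^ l) by (apply pow_lt; lra). pose proof (pos_INR l).
  replace (INR 2) with 2 by (simpl; ring). set (q := 2 ^ l) in *. field. repeat split; try lra.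
Qed.

Lemma aa_bounds l : 0 <= aa l <= 1.
Proof.
  induction l.
  - rewrite aa_0. lra.
  - pose proof (aa_rec l) as Hr. pose proof (pos_INR l).
    assert (aa (S l) = aa l * (2 * INR l + 1) / (2 * INR l + 2)) as E.
    { apply (Rmult_eq_reg_r (2 * INR l + 2)); [rewrite Hr; field; lra | lra]. }
    rewrite E. split.
    + apply Rmult_le_pos; [nra|]. left. apply Rinv_0_lt_compat. lra.
    + apply (Rmult_le_reg_r (2 * INR l + 2)); [lra|]. unfold Rdiv. rewrite Rmult_assoc, Rinv_l by lra. nra.
Qed.

Lemma sum_rev f n : sum_f_R0 f n = sum_f_R0 (fun k => f (n - k)%nat) n.
Proof.
  revert f. induction n; intros f; [reflexivity|].
  rewrite decomp_sum by lia. simpl pred. rewrite (IHn (fun i => f (S i))).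
  rewrite tech5. rewrite Nat.sub_diag. rewrite Rplus_comm. f_equal.
  apply sum_eq. intros i Hi. f_equal. lia.
Qed.

Definition cc (n : nat) : R := sum_f_R0 (fun k => aa k * aa (n - k)%nat) n.
Definition TT (n : nat) : R := sum_f_R0 (fun k => INR k * aa k * aa (n - k)%nat) n.

Lemma TT_sym n : 2 * TT n = INR n * cc n.
Proof.
  unfold TT, cc.
  assert (E : TT n = sum_f_R0 (fun k => (INR n - INR k) * aa k * aa (n - k)%nat) n).
  { unfold TT. rewrite sum_rev. apply sum_eq. intros i Hi.
    rewrite minus_INR by exact Hi. replace (n - (n - i))%nat with i by lia. ring. }
  unfold TT in E.
  transitivity (sum_f_R0 (fun k => INR k * aa k * aa (n - k)%nat) n +
     sum_f_R0 (fun k => (INR n - INR k) * aa k * aa (n - k)%nat) n); [rewrite <- E; ring|].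
  rewrite <- sum_plus, scal_sum. apply sum_eq. intros. ring.
Qed.

Lemma TT_S n : TT (S n) = TT n + cc n / 2.
Proof.
  unfold TT at 1. rewrite decomp_sum by lia. simpl pred.
  replace (INR 0 * aa 0 * aa (S n - 0)%nat) with 0 by (simpl; ring).
  rewrite Rplus_0_l.
  unfold TT, cc. unfold Rdiv. rewrite (Rmult_comm (sum_f_R0 _ n) (/ 2)), scal_sum. rewrite <- sum_plus.
  apply sum_eq. intros i Hi. replace (S n - S i)%nat with (n - i)%nat by lia.
  pose proof (aa_rec i). rewrite S_INR.
  replace ((INR i + 1) * aa (S i) * aa (n - i)%nat) with (aa (S i) * (2 * INR i + 2) * aa (n - i)%nat / 2) by field.
  rewrite H. field.
Qed.

Lemma cc_one n : cc n = 1.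
Proof.
  induction n.
  - unfold cc. simpl. rewrite aa_0. ring.
  - pose proof (TT_sym (S n)) as H1. pose proof (TT_sym n) as H2. rewrite TT_S in H1.
    rewrite S_INR in H1. rewrite IHn in *. pose proof (pos_INR n).
    assert ((INR n + 1) * (cc (S n) - 1) = 0) as H3 by lra.
    apply Rmult_integral in H3. destruct H3; lra.
Qed.

Lemma aa_series t : 0 <= t < 1 ->
  exists f, infinite_sum (fun l => aa l * t ^ l) f /\ f * f * (1 - t) = 1 /\ 1 <= f.
Proof.
  intros Ht.
  assert (Hg : ex_series (fun l => aa l * t ^ l)).
  { apply (@ex_series_le R_AbsRing R_CompleteNormedModule _ (fun l => t ^ l)).
    - intros n. change (norm (aa n * t ^ n)) with (Rabs (aa n * t ^ n)).
      pose proof (aa_bounds n). pose proof (pow_le t n (proj1 Ht)).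
      rewrite Rabs_right by nra. nra.
    - apply ex_series_geom. rewrite Rabs_right; lra. }
  set (f := Series (fun l => aa l * t ^ l)).
  pose proof (Series_correct _ Hg) as Hf. fold f in Hf.
  assert (Habs : ex_series (fun l => Rabs (aa l * t ^ l))).
  { apply (ex_series_ext (fun l => aa l * t ^ l)); [|exact Hg].
    intros n. pose proof (aa_bounds n). pose proof (pow_le t n (proj1 Ht)).
    rewrite Rabs_right by nra. reflexivity. }
  pose proof (is_series_mult _ _ _ _ Hf Hf Habs Habs) as Hm.
  assert (Hm' : is_series (fun n => t ^ n) (f * f)).
  { apply (is_series_ext _ _ _ ) with (2 := Hm). intros n.
    rewrite (sum_eq _ (fun k => (aa k * aa (n - k)%nat) * t ^ n)).
    - rewrite <- scal_sum. fold (cc n). rewrite cc_one. apply Rmult_1_r.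
    - intros k Hk. replace (t ^ n) with (t ^ k * t ^ (n - k)).
      + ring.
      + rewrite <- pow_add. f_equal. lia. }
  exists f. split; [|split].
  - apply is_series_Reals. exact Hf.
  - pose proof (is_series_unique _ _ Hm') as E1.
    pose proof (is_series_geom t ltac:(rewrite Rabs_right; lra)) as Hg2.
    pose proof (is_series_unique _ _ Hg2) as E2. rewrite E1 in E2. rewrite E2. field. lra.
  - apply is_series_Reals in Hf.
    assert (Hpos : forall n, 0 <= aa n * t ^ n) by
      (intro n; apply Rmult_le_pos; [apply aa_bounds | apply pow_le; lra]).
    pose proof (psum_le _ _ 0 Hpos Hf) as H.
    simpl in H. rewrite aa_0 in H. lra.
Qed.
Lemma psum_interleave (g b : nat -> R) :
  (forall l, g (2 * l)%nat = b l) -> (forall l, g (S (2 * l)) = 0) ->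
  forall l, sum_f_R0 g (2 * l) = sum_f_R0 b l /\ sum_f_R0 g (S (2 * l)) = sum_f_R0 b l.
Proof.
  intros Hg Ho. induction l as [|l [IH1 IH2]].
  - pose proof (Hg 0%nat) as G0. pose proof (Ho 0%nat) as O0. simpl in G0, O0 |- *.
    split; [exact G0|]. rewrite G0, O0. ring.
  - assert (E : (2 * S l)%nat = S (S (2 * l))) by lia.
    split.
    + rewrite E, tech5, IH2, <- E, Hg, tech5. reflexivity.
    + rewrite E, tech5, tech5, IH2, <- E, Hg, Ho, tech5. ring.
Qed.

Lemma interleave (g b : nat -> R) L :
  infinite_sum b L ->
  (forall l, g (2 * l)%nat = b l) -> (forall l, g (S (2 * l)) = 0) -> infinite_sum g L.
Proof.
  intros Hb Hg Ho eps Heps. destruct (Hb eps Heps) as [M HM].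
  exists (2 * M)%nat. intros n Hn.
  pose proof (Nat.div2_odd n) as En.
  assert (Hd : (Nat.div2 n >= M)%nat).
  { destruct (Nat.odd n); simpl in En; lia. }
  destruct (Nat.odd n); simpl Nat.b2n in En.
  - rewrite En, Nat.add_1_r. rewrite (proj2 (psum_interleave g b Hg Ho _)). apply HM. exact Hd.
  - rewrite En, Nat.add_0_r. rewrite (proj1 (psum_interleave g b Hg Ho _)). apply HM. exact Hd.
Qed.

Lemma inf_sum_scal a l k : infinite_sum a l -> infinite_sum (fun n => k * a n) (k * l).
Proof.
  intros H. apply is_series_Reals. apply is_series_Reals in H.
  exact (@is_series_scal_l R_AbsRing R_NormedModule k a l H).
Qed.

Section Sqz.
Variable zeta : Cpx.
Hypothesis Hz : zeta <> C0.
Let r := Cabs zeta.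
Let ch := cosh r.
Let tau := tanh r * tanh r.

Lemma r_pos : 0 < r.
Proof. unfold r, Cabs. apply sqrt_lt_R0, Cnorm2_pos, Hz. Qed.

Lemma r_sq : r * r = Cnorm2 zeta.
Proof. unfold r, Cabs. apply sqrt_sqrt, Cnorm2_ge0. Qed.

Lemma cosh_facts : 1 < ch /\ 1 - tau = / (ch * ch).
Proof.
  pose proof r_pos as Hr.
  assert (Huv : exp r * exp (- r) = 1) by (rewrite <- exp_plus, Rplus_opp_r, exp_0; reflexivity).
  assert (Hu : 1 < exp r) by (rewrite <- exp_0; apply exp_increasing; exact Hr).
  pose proof (exp_pos (- r)) as Hv.
  assert (Hcs : ch * ch - sinh r * sinh r = 1).
  { unfold ch, cosh, sinh. rewrite <- Huv. field. }
  assert (Hc1 : 1 < ch).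
  { unfold ch, cosh. set (u := exp r) in *. set (v := exp (- r)) in *. nra. }
  split; [exact Hc1|].
  unfold tau, tanh. fold ch.
  replace (1 - sinh r / ch * (sinh r / ch)) with ((ch * ch - sinh r * sinh r) / (ch * ch)) by (field; lra).
  rewrite Hcs. field. lra.
Qed.

Lemma sqz_even l : Cnorm2 (sqz zeta (2 * l)%nat) = / ch * (aa l * tau ^ l).
Proof.
  pose proof r_pos as Hr. pose proof r_sq as Hr2. pose proof cosh_facts as [Hch _].
  unfold sqz. fold r. 
  replace (Nat.even (2 * l)) with true by (symmetry; apply Nat.even_spec; exists l; reflexivity).
  rewrite Nat.div2_double.
  rewrite Cnorm2_scale, Cnorm2_pow, Cnorm2_scale. rewrite <- Hr2.
  fold ch.
  replace (- tanh r / r * (- tanh r / r) * (r * r)) with tau by (unfold tau; field; lra).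
  unfold aa.
  assert (Hs1 : sqrt ch * sqrt ch = ch) by (apply sqrt_sqrt; lra).
  assert (Hs2 : sqrt (INR (fact (2 * l))) * sqrt (INR (fact (2 * l))) = INR (fact (2 * l)))
    by (apply sqrt_sqrt, pos_INR).
  assert (0 < sqrt ch) by (apply sqrt_lt_R0; lra).
  assert (0 < 2 ^ l) by (apply pow_lt; lra).
  pose proof (INR_fact_neq_0 l).
  set (q := 2 ^ l) in *. set (s1 := sqrt ch) in *. set (s2 := sqrt (INR (fact (2 * l)))) in *.
  set (T := tau ^ l).
  rewrite <- Hs1 at 1. rewrite <- Hs2. field. repeat split; lra.
Qed.

Lemma sqz_odd l : Cnorm2 (sqz zeta (S (2 * l))) = 0.
Proof.
  unfold sqz.
  destruct (Nat.even (S (2 * l))) eqn:E.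
  - apply Nat.even_spec in E. destruct E as [m Hm]. lia.
  - apply Cnorm2_C0.
Qed.

Lemma sqz_normalized : normalized (sqz zeta).
Proof.
  pose proof cosh_facts as [Hch Htau].
  assert (Ht : 0 <= tau < 1).
  { split; [unfold tau; nra|]. assert (0 < / (ch * ch)) by (apply Rinv_0_lt_compat; nra). lra. }
  destruct (aa_series tau Ht) as [f [Hf [Hff Hf1]]].
  assert (Hfc : f = ch).
  { rewrite Htau in Hff. assert (f * f = ch * ch) as E.
    { apply (Rmult_eq_reg_r (/ (ch * ch))); [|apply Rinv_neq_0_compat; nra].
      rewrite Hff. field. lra. }
    nra. }
  apply (interleave _ (fun l => / ch * (aa l * tau ^ l))).
  - replace 1 with (/ ch * f) by (rewrite Hfc; field; lra).
    apply inf_sum_scal. exact Hf.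
  - intros l. apply sqz_even.
  - intros l. apply sqz_odd.
Qed.

Lemma sqz_J : J_value (sqz zeta) meas_even_odd meas_even_odd 1.
Proof.
  pose proof cosh_facts as [Hch _].
  apply J_i.
  - apply sqz_normalized.
  - pose proof (sqz_even 0) as E. simpl in E. rewrite aa_0 in E.
    replace (Cnorm2 (sqz zeta 0)) with (/ ch) by (rewrite E; ring).
    rewrite <- Rinv_1. apply Rinv_lt_contravar; lra.
  - intros n Hn. unfold sqz.
    replace (Nat.even n) with false by (unfold Nat.odd in Hn; destruct (Nat.even n); simpl in *; congruence).
    reflexivity.
Qed.
End Sqz.
Theorem mainTheorem3 :
  (* (i) only even Fock components *)
  (forall lam : nat -> Cpx,
     normalized lam -> Cnorm2 (lam 0%nat) < 1 ->
     (forall n, Nat.odd n = true -> lam n = C0) ->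
     (forall x y : bool,
        prob lam meas_even_odd meas_even_odd (xorb x y) (xorb x y) x y 1) /\
     prob lam meas_even_odd meas_even_odd false false false false 1 /\
     prob lam meas_even_odd meas_even_odd false false true true 1 /\
     prob lam meas_even_odd meas_even_odd true true false true 1 /\
     prob lam meas_even_odd meas_even_odd true true true false 1 /\
     J_value lam meas_even_odd meas_even_odd 1) /\
  (* (ii) only odd Fock components *)
  (forall lam : nat -> Cpx,
     normalized lam -> Cnorm2 (lam 0%nat) < 1 ->
     (forall n, Nat.even n = true -> lam n = C0) ->
     J_value lam meas_odd_even meas_even_odd 1) /\
  (* even coherent state  xi ∝ |alpha> + |-alpha> *)
  (forall (alpha c : Cpx) (lam : nat -> Cpx),
     alpha <> C0 ->
     (forall n, lam n = Cmul c (Cadd (coh alpha n) (coh (Copp alpha) n))) ->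
     normalized lam ->
     J_value lam meas_even_odd meas_even_odd 1) /\
  (* odd coherent state  xi ∝ |alpha> - |-alpha> *)
  (forall (alpha c : Cpx) (lam : nat -> Cpx),
     alpha <> C0 ->
     (forall n, lam n = Cmul c (Cadd (coh alpha n) (Copp (coh (Copp alpha) n)))) ->
     normalized lam ->
     J_value lam meas_odd_even meas_even_odd 1) /\
  (* squeezed vacuum *)
  (forall zeta : Cpx, zeta <> C0 ->
     J_value (sqz zeta) meas_even_odd meas_even_odd 1).
Proof.
  split.
  { intros lam Hn H0 Hodd. pose proof (part_i lam Hn H0 Hodd) as P.
    split; [exact P|]. split; [exact (P false false)|]. split; [exact (P true true)|].
    split; [exact (P false true)|]. split; [exact (P true false)|].
    exact (J_i lam Hn H0 Hodd). }
  split; [exact J_ii|].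
  split; [exact even_coh|].
  split; [exact odd_coh|].
  exact sqz_J.
Qed.
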